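(* Every lexicographic transduction $f:\Sigma^*\rightharpoonup\Gamma^*$ (i.e. $f\in\mathsf{Lex}$) is regularity preserving: for every regular language $L\subseteq\Gamma^*$, the set $f^{-1}(L)=\{u\in\mathrm{dom}(f): f(u)\in L\}$ is regular.
   Context: Alphabets are finite. For words $u,v$ of equal length over alphabets $\Sigma_1,\Sigma_2$, $u\otimes v$ is the word over $\Sigma_1\times\Sigma_2$ with $(u\otimes v)[i]=(u[i],v[i])$. A transduction is a partial function $f:\Sigma^*\rightharpoonup\Gamma^*$. A simple transduction is a transduction $f=\sum_{i=1}^n L_i\triangleright w_i$, where $L_1,\dots,L_n\subseteq\Sigma^*$ are pairwise disjoint regular languages and each $w_i\in\Gamma^{\le 1}$ is a word of length at most 1. It satisfies $f(u)=w_i$ if $u\in L_i$, and $f(u)$ is undefined if $u\notin\bigcup_iL_i$. An ordered alphabet is a pair $\lambda=(B,\prec)$ with $B$ a finite set and $\prec$ a strict linear order on $B$. The order is extended to $B^n$ for each $n$ by: $u\prec v$ iff there is $i\le n$ with $u[i]\prec v[i]$ and $u[j]=v[j]$ for all $i<j\le n$ (most significant letter on the right). For a transduction $f:(\Sigma\times B)^*\rightharpoonup\Gamma^*$, the transduction $\mathsf{maplex}_\lambda f:\Sigma^*\rightharpoonup\Gamma^*$ maps $u$ to $f(u\otimes b_1)f(u\otimes b_2)\cdots f(u\otimes b_m)$, where $b_1\prec\cdots\prec b_m$ is the increasing enumeration of all of $B^{|u|}$. It is defined on $u$ iff every $f(u\otimes b_j)$ is defined. The classes are defined inductively: - $\mathsf{Lex}_0$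 is the class of simple transductions; - $\mathsf{Lex}_{k+1}=\{\mathsf{maplex}_\lambda f: \lambda=(B,\prec)\text{ an ordered alphabet},\ f:(\Sigma\times B)^*\rightharpoonup\Gamma^*\text{ in }\mathsf{Lex}_k\}$; - $\mathsf{Lex}=\bigcup_k\mathsf{Lex}_k$, the lexicographic transductions. Elements of $\mathsf{Lex}_k$ are called $k$-lexicographic. *)

(* Defs.v *)
From mathcomp Require Import all_boot.
Set Implicit Arguments. Unset Strict Implicit. Unset Printing Implicit Defensive.

Definition regular (S : finType) (L : seq S -> Prop) : Prop :=
  exists (Q : finType) (q0 : Q) (delta : Q -> S -> Q) (F : pred Q),
    forall w : seq S, F (foldl delta q0 w) <-> L w.

Definition transduction (S G : finType) := seq S -> option (seq G).

Definition simple_transduction (S G : finType) (f : transduction S G) : Prop :=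
  exists (n : nat) (L : 'I_n -> seq S -> Prop) (w : 'I_n -> seq G),
    (forall i, regular (L i)) /\
    (forall i j, i <> j -> forall u, L i u -> L j u -> False) /\
    (forall i, size (w i) <= 1) /\
    (forall u, (forall i, L i u -> f u = Some (w i)) /\
               ((forall i, ~ L i u) -> f u = None)).

Definition strict_linear_order (B : finType) (lt : rel B) : Prop :=
  irreflexive lt /\ transitive lt /\ (forall x y, x != y -> lt x y || lt y x).

(* Extension of the order to B^n: most significant letter on the right. *)
Definition lexlt (B : finType) (lt : rel B) (n : nat) (u v : n.-tuple B) : bool :=
  [exists i : 'I_n, lt (tnth u i) (tnth v i) &&
     [forall j : 'I_n, (i < j) ==> (tnth u j == tnth v j)]].

Definition lexle (B : finType) (lt : rel B) (n : nat) (u v : n.-tuple B) : bool :=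
  (u == v) || lexlt lt u v.

Definition lex_enum (B : finType) (lt : rel B) (n : nat) : seq (n.-tuple B) :=
  sort (@lexle B lt n) (enum {: n.-tuple B}).

Definition maplex (S G B : finType) (lt : rel B) (f : transduction (S * B)%type G)
  : transduction S G :=
  fun u =>
    let outs := [seq f (zip u (val b)) | b <- lex_enum lt (size u)] in
    if all (fun o => o != None) outs then Some (flatten [seq odflt [::] o | o <- outs])
    else None.

Fixpoint isLex (k : nat) (S G : finType) (f : transduction S G) {struct k} : Prop :=
  match k with
  | 0 => simple_transduction f
  | k'.+1 => exists (B : finType) (lt : rel B), strict_linear_order lt /\
       exists g : transduction (S * B)%type G,
         @isLex k' (S * B)%type G g /\ forall u, f u = maplex lt g u
  end.

Definition lexicographic (S G : finType) (f : transduction S G) : Prop :=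
  exists k, isLex k f.

Definition preimage (S G : finType) (f : transduction S G) (L : seq G -> Prop)
  : seq S -> Prop := fun u => exists w, f u = Some w /\ L w.

(* Main.v *)
Require Import Defs.
From mathcomp Require Import all_boot zify.
Set Implicit Arguments. Unset Strict Implicit. Unset Printing Implicit Defensive.

Section Lex.
Variables (B : finType) (lt : rel B).
Hypothesis hlt : strict_linear_order lt.

Let ltirr x : lt x x = false.
Proof. by case: hlt => H _; apply: negbTE; rewrite H. Qed.
Let lttr : transitive lt.
Proof. by case: hlt => _ []. Qed.
Let lttot x y : x != y -> lt x y || lt y x.
Proof. by case: hlt => _ [] _; apply. Qed.

Fixpoint rlt (u v : seq B) : bool :=
  match u, v with
  | x :: u', y :: v' => lt x y || (x == y) && rlt u' v'
  | _, _ => false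
  end.
Definition slt u v := rlt (rev u) (rev v).
Definition sle u v := (u == v) || slt u v.

Lemma rlt_irr u : rlt u u = false.
Proof. by elim: u => //= x u ->; rewrite ltirr andbF. Qed.

Lemma rlt_trans : transitive rlt.
Proof.
move=> y x; elim: x y => [|a x IH] [|b y] [|c z] //=.
case/orP=> [Hab|/andP[/eqP <- Hxy]]; case/orP=> [Hbc|/andP[/eqP <- Hyz]].
- by rewrite (lttr Hab Hbc).
- by rewrite Hab.
- by rewrite Hbc.
- by rewrite eqxx (IH _ _ Hxy Hyz) orbT.
Qed.

Lemma rlt_total u v : size u = size v -> u != v -> rlt u v || rlt v u.
Proof.
elim: u v => [|a u IH] [|b v] //= [] Hs Hne.
case: (eqVneq a b) => [Eab|Hab].
- subst b; rewrite ltirr /=; apply: IH => //.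
  by apply: contraNneq Hne => ->.
- by case/orP: (lttot Hab) => ->; rewrite ?orbT.
Qed.

Lemma slt_irr u : slt u u = false.
Proof. exact: rlt_irr. Qed.
Lemma slt_trans : transitive slt.
Proof. move=> y x z; exact: rlt_trans. Qed.
Lemma slt_total u v : size u = size v -> u != v -> slt u v || slt v u.
Proof.
move=> Hs Hne; apply: rlt_total; first by rewrite !size_rev.
by rewrite (inj_eq (can_inj (@revK B))).
Qed.
Lemma slt_rcons u v x y :
  slt (rcons u x) (rcons v y) = lt x y || (x == y) && slt u v.
Proof. by rewrite /slt !rev_rcons. Qed.

Lemma sle_trans : transitive sle.
Proof.
move=> y x z; rewrite /sle; case/orP=> [/eqP ->//|Hxy]; case/orP=> [/eqP <-|Hyz].
  by rewrite Hxy orbT.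
by rewrite (slt_trans Hxy Hyz) orbT.
Qed.
Lemma sle_anti : antisymmetric sle.
Proof.
move=> x y; rewrite /sle; case/andP; case/orP=> [/eqP//|Hxy]; case/orP=> [/eqP//|Hyx].
by have := slt_trans Hxy Hyx; rewrite slt_irr.
Qed.

Lemma slt_nth x0 n : forall u v : seq B, size u = n -> size v = n ->
  slt u v <-> exists i, [/\ i < n, lt (nth x0 u i) (nth x0 v i) &
     forall j, i < j < n -> nth x0 u j = nth x0 v j].
Proof.
elim: n => [|n IH] u v.
  move=> /size0nil -> /size0nil ->; split => //; by move=> [i []].
case/lastP: u => [//|u x]; case/lastP: v => [//|v y]; rewrite !size_rcons => -[Hu] [Hv].
rewrite slt_rcons; split.
- case/orP => [Hxy | /andP[/eqP <- /(IH _ _ Hu Hv) [i [Hi Hlt Hj]]]].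
  + exists n; rewrite !nth_rcons Hu Hv ltnn eqxx; split=> // j /andP[Hnj Hjn]; lia.
  + exists i; split; first lia.
      by rewrite !nth_rcons Hu Hv Hi.
    move=> j /andP[Hij Hjn]; rewrite !nth_rcons Hu Hv; case: (ltnP j n) => Hjn'.
      by apply: Hj; rewrite Hij Hjn'.
    have -> : j = n by lia.
    by rewrite eqxx.
- move=> [i [Hi Hlt Hj]]; rewrite !nth_rcons Hu Hv in Hlt.
  case: (ltnP i n) Hlt => Hin Hlt.
  + apply/orP; right; apply/andP; split.
      have Exy : x = y.
        by have := Hj n; rewrite !nth_rcons Hu Hv ltnn eqxx; apply; apply/andP; split.
      by rewrite Exy eqxx.
    apply/(IH u v Hu Hv); exists i; split => // j /andP[H1 H2].
    have := Hj j; rewrite !nth_rcons Hu Hv H2; apply; rewrite H1 /=; lia.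
  + have Hi' : i = n by lia.
    by move: Hlt; rewrite Hi' eqxx => ->.
Qed.

Lemma lexlt_slt n (u v : n.-tuple B) : lexlt lt u v = slt u v.
Proof.
case: n u v => [|m] u v.
  rewrite (tuple0 u) (tuple0 v) /slt /=.
  by apply/existsP => -[[]].
have x0 := tnth u ord0.
apply/idP/idP.
- case/existsP => i /andP[Hlt /forallP Hj].
  apply/(slt_nth x0 (size_tuple u) (size_tuple v)).
  exists i; split => //; first by rewrite -!(tnth_nth x0).
  move=> j /andP[H1 H2]; have := Hj (Ordinal H2); rewrite /= H1 /= => /eqP.
  by rewrite !(tnth_nth x0).
- move/(slt_nth x0 (size_tuple u) (size_tuple v)) => [i [Hi Hlt Hj]].
  apply/existsP; exists (Ordinal Hi); rewrite !(tnth_nth x0) /= Hlt /=.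
  apply/forallP => j; apply/implyP => Hij; rewrite !(tnth_nth x0); apply/eqP/Hj.
  by rewrite Hij ltn_ord.
Qed.

Definition lex_seq n := map val (lex_enum lt n).

Lemma lexle_sle n (u v : n.-tuple B) : lexle lt u v = sle u v.
Proof. by rewrite /lexle /sle lexlt_slt. Qed.

Lemma lex_seq_sorted n : sorted sle (lex_seq n).
Proof.
rewrite sorted_map.
have : sorted (@lexle B lt n) (lex_enum lt n).
  apply: sort_sorted => u v; rewrite !lexle_sle /sle.
  case: (eqVneq (val u) (val v)) => [->|H]; first by rewrite ?eqxx.
  by rewrite /=; apply: slt_total; rewrite ?size_tuple.
by apply: sub_sorted => u v; rewrite lexle_sle.
Qed.

Lemma lex_seq_uniq n : uniq (lex_seq n).
Proof. by rewrite (map_inj_uniq val_inj) sort_uniq enum_uniq. Qed.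

Lemma mem_lex_seq n s : (s \in lex_seq n) = (size s == n).
Proof.
apply/mapP/idP => [[t _ ->]|Hs]; first by rewrite size_tuple.
by exists (Tuple Hs); rewrite // mem_sort mem_enum.
Qed.

Lemma lex_seq0 : lex_seq 0 = [:: [::]].
Proof.
have Hsz : size (lex_seq 0) = 1.
  by rewrite size_map size_sort -cardE card_tuple.
case Hl: (lex_seq 0) Hsz => [|a [|b l]] // _.
have : a \in lex_seq 0 by rewrite Hl mem_head.
by rewrite mem_lex_seq => /eqP/size0nil ->.
Qed.

Definition leB x y := (x == y) || lt x y.
Definition cs := sort leB (enum B).

Lemma sorted_leB_lt s : uniq s -> sorted leB s -> sorted lt s.
Proof.
elim: s => [|a s IH] // /andP[Ha Hu].
case: s IH Ha Hu => [|b l] IH Ha Hu //= /andP[Hab Hp].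
apply/andP; split; last exact: (IH Hu Hp).
move: Hab; rewrite /leB; case/orP => // /eqP Eab.
by move: Ha; rewrite Eab inE eqxx.
Qed.

Lemma cs_pairwise : pairwise lt cs.
Proof.
rewrite -sorted_pairwise //; apply: sorted_leB_lt.
  by rewrite sort_uniq enum_uniq.
apply: sort_sorted => x y; rewrite /leB.
case: (eqVneq x y) => [->|H]; first by rewrite ?eqxx.
by rewrite /=; apply: lttot.
Qed.

Lemma mem_cs c : c \in cs.
Proof. by rewrite mem_sort mem_enum. Qed.

Lemma pairwise_blocks (cs' : seq B) (Ls : seq (seq B)) :
  pairwise lt cs' -> pairwise slt Ls ->
  pairwise slt [seq rcons b c | c <- cs', b <- Ls].
Proof.
move=> Hc HL; elim: cs' Hc => [|c cs' IH] //.
rewrite pairwise_cons => /andP[Hall Hp].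
rewrite pairwise_cat IH // andbT pairwise_map.
apply/andP; split.
  apply/allrelP => x y /mapP[a _ ->] /allpairsP[[c' b] [/= Hc' _ ->]].
  by rewrite slt_rcons (allP Hall _ Hc').
move: HL; apply: sub_pairwise => a b /=.
by rewrite slt_rcons ltirr eqxx.
Qed.

Lemma lex_seqS n :
  lex_seq n.+1 = [seq rcons b c | c <- cs, b <- lex_seq n].
Proof.
have HP : pairwise slt [seq rcons b c | c <- cs, b <- lex_seq n].
  apply: pairwise_blocks; first exact: cs_pairwise.
  have := lex_seq_sorted n; have := lex_seq_uniq n.
  rewrite sorted_pairwise; last exact: sle_trans.
  elim: (lex_seq n) => [|a l IH] //=; move=> /andP[Ha Hu] /andP[Hall Hp].
  rewrite IH // andbT; apply/allP => x Hx.
  have /orP[/eqP E|//] := allP Hall x Hx.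
  by move: Ha; rewrite E Hx.
have Hs : sorted slt [seq rcons b c | c <- cs, b <- lex_seq n].
  by rewrite sorted_pairwise //; exact: slt_trans.
apply: (sorted_eq sle_trans sle_anti).
- exact: lex_seq_sorted.
- by apply: sub_sorted Hs => x y H; rewrite /sle H orbT.
- apply: uniq_perm; first exact: lex_seq_uniq.
    apply: sorted_uniq Hs; [exact: slt_trans | exact: slt_irr].
  move=> s; rewrite mem_lex_seq; apply/idP/allpairsP.
  + case/lastP: s => [//|s x]; rewrite size_rcons eqSS => Hs'.
    by exists (x, s); rewrite /= mem_cs mem_lex_seq.
  + by move=> [[c b] [/= _ Hb ->]]; rewrite size_rcons; rewrite mem_lex_seq in Hb.
Qed.

End Lex.

Section Mon.
Variables (Q : finType).
Definition mone : {ffun Q -> Q} := [ffun q => q].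
Definition mmul (a b : {ffun Q -> Q}) : {ffun Q -> Q} := [ffun q => b (a q)].
Definition omul (a b : option {ffun Q -> Q}) :=
  match a, b with Some x, Some y => Some (mmul x y) | _, _ => None end.
Arguments omul : simpl never.
Definition oprod (s : seq (option {ffun Q -> Q})) := foldr omul (Some mone) s.

Lemma omul1o o : omul (Some mone) o = o.
Proof. by case: o => [y|]; rewrite /omul //=; congr Some; apply/ffunP => q; rewrite !ffunE. Qed.
Lemma omulo1 o : omul o (Some mone) = o.
Proof. by case: o => [y|]; rewrite /omul //=; congr Some; apply/ffunP => q; rewrite !ffunE. Qed.
Lemma omulA a b c : omul a (omul b c) = omul (omul a b) c.
Proof.
by case: a => [a|]; case: b => [b|]; case: c => [c|]; rewrite /omul //=; congr Some; apply/ffunP => q; rewrite !ffunE.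
Qed.
Lemma oprod_cat s1 s2 : oprod (s1 ++ s2) = omul (oprod s1) (oprod s2).
Proof. rewrite /oprod; elim: s1 => [|a s IH] /=; first by rewrite omul1o.
by rewrite IH omulA. Qed.
Lemma oprod_flatten ss : oprod (flatten ss) = oprod (map oprod ss).
Proof. by elim: ss => [|s ss IH] //=; rewrite oprod_cat IH. Qed.

Variables (G : eqType) (d : Q -> G -> Q).
Definition phi (w : seq G) : {ffun Q -> Q} := [ffun q => foldl d q w].

Lemma oprod_maplex (os : seq (option (seq G))) :
  oprod [seq omap phi o | o <- os] =
  if all (fun o => o != None) os then Some (phi (flatten [seq odflt [::] o | o <- os]))
  else None.
Proof.
elim: os => [|o os IH] /=.
  by congr Some; apply/ffunP => q; rewrite !ffunE.
case: o => [w|] /=; last by rewrite /omul.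
rewrite IH; case: all => /=; last by rewrite /omul.
by rewrite /omul; congr Some; apply/ffunP => q; rewrite !ffunE foldl_cat.
Qed.
End Mon.

Definition Inv (S G : finType) (f : transduction S G) :=
  forall (Q : finType) (d : Q -> G -> Q), exists (P : finType) (p0 : P)
    (dP : P -> S -> P) (out : P -> option {ffun Q -> Q}),
    forall u, out (foldl dP p0 u) = omap (phi d) (f u).

Lemma Inv_ext (S G : finType) (f g : transduction S G) :
  (forall u, f u = g u) -> Inv g -> Inv f.
Proof.
move=> E H Q d; have [P [p0 [dP [out Ho]]]] := H Q d.
by exists P, p0, dP, out => u; rewrite E.
Qed.

Lemma Inv_maplex (S G B : finType) (lt : rel B) (g : transduction (S * B)%type G) :
  strict_linear_order lt -> Inv g -> Inv (maplex lt g).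
Proof.
move=> hlt Hg Q d; have [D [d0 [dD [outD HD]]]] := Hg Q d.
pose O := option {ffun Q -> Q}.
pose dP := fun (Phi : {ffun {ffun D -> O} -> O}) (x : S) =>
  [ffun F : {ffun D -> O} => oprod [seq Phi [ffun e => F (dD e (x, c))] | c <- cs lt]].
pose p0 : {ffun {ffun D -> O} -> O} := [ffun F : {ffun D -> O} => F d0].
have Hrun : forall u F, foldl dP p0 u F =
    oprod [seq F (foldl dD d0 (zip u b)) | b <- lex_seq lt (size u)].
  elim/last_ind => [|u x IH] F.
    by rewrite /= ffunE lex_seq0 /= omulo1.
  rewrite foldl_rcons ffunE size_rcons (lex_seqS hlt) map_flatten oprod_flatten.
  rewrite -!map_comp; congr oprod; apply: eq_map => c /=.
  rewrite IH -map_comp; congr oprod; apply/eq_in_map => b Hb /=.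
  rewrite ffunE zip_rcons ?foldl_rcons //.
  by move: Hb; rewrite mem_lex_seq => /eqP ->.
exists {ffun {ffun D -> O} -> O}, p0, dP, (fun Phi : {ffun {ffun D -> O} -> O} => Phi [ffun e => outD e : O]).
move=> u; rewrite Hrun.
have -> : [seq [ffun e => outD e] (foldl dD d0 (zip u b)) | b <- lex_seq lt (size u)]
  = [seq omap (phi d) o | o <- [seq g (zip u (val b)) | b <- lex_enum lt (size u)]].
  by rewrite -!map_comp; apply: eq_map => b /=; rewrite ffunE HD.
rewrite oprod_maplex /maplex.
by case: all.
Qed.

Lemma regular_family (S : finType) n (L : nat -> seq S -> Prop) :
  (forall i, i < n -> regular (L i)) ->
  exists (Q : finType) (q0 : Q) (dl : Q -> S -> Q) (F : nat -> pred Q),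
    forall i, i < n -> forall w, F i (foldl dl q0 w) <-> L i w.
Proof.
elim: n L => [|n IH] L H.
  by exists unit, tt, (fun _ _ => tt), (fun _ _ => false).
have [Q [q0 [dl [F HF]]]] := IH L (fun i Hi => H i (leqW Hi)).
have [Q' [q0' [dl' [F' HF']]]] := H n (ltnSn n).
exists (Q * Q')%type, (q0, q0'), (fun q a => (dl q.1 a, dl' q.2 a)),
  (fun i q => if i < n then F i q.1 else F' q.2).
have Hpair : forall w p p', foldl (fun q a => (dl q.1 a, dl' q.2 a)) (p, p') w
    = (foldl dl p w, foldl dl' p' w).
  by elim => [|a w IHw] p p' //=; rewrite IHw.
move=> i Hi w; rewrite Hpair /=; case: ltnP => Hin; first exact: HF.
by have -> : i = n by lia.
Qed.

Lemma Inv_simple (S G : finType) (f : transduction S G) :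
  simple_transduction f -> Inv f.
Proof.
move=> [n [L [w [HL [_ [_ Hf]]]]]] Q d.
pose L' i u := exists j : 'I_n, nat_of_ord j = i /\ L j u.
have HL' : forall i, i < n -> regular (L' i).
  move=> i Hi; have [Q1 [q1 [d1 [F1 H1]]]] := HL (Ordinal Hi).
  exists Q1, q1, d1, F1 => u; rewrite H1; split.
    by move=> Hu; exists (Ordinal Hi).
  by move=> [j [Ej Hj]]; have -> : Ordinal Hi = j by apply: val_inj.
have [P [p0 [dP [F HF]]]] := regular_family HL'.
exists P, p0, dP, (fun p => if [pick j : 'I_n | F j p] is Some j then Some (phi d (w j)) else None).
move=> u; case: pickP => [j Hj | Hnone].
  have /(HF _ (ltn_ord j)) [j' [Ej Hj']] := Hj.
  have Ejj : j' = j by apply: val_inj.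
  by subst j'; rewrite (proj1 (Hf u) j Hj').
rewrite (proj2 (Hf u)) // => j Hj.
have HFj : F j (foldl dP p0 u) by apply/(HF _ (ltn_ord j)); exists j.
by move: (Hnone j); rewrite HFj.
Qed.

Lemma Inv_lex k (S G : finType) (f : transduction S G) : isLex k f -> Inv f.
Proof.
elim: k S f => [|k IH] S f /=; first exact: Inv_simple.
move=> [B [lt [hlt [g [Hg Hfg]]]]].
exact: Inv_ext Hfg (Inv_maplex hlt (IH _ _ Hg)).
Qed.

Unset Implicit Arguments.

Theorem mainTheorem15 (S G : finType) (f : transduction S G) :
  lexicographic f ->
  forall L : seq G -> Prop, regular L -> regular (preimage f L).
Proof.
move=> [k Hk] L [Q [q0 [d [F HF]]]].
have [P [p0 [dP [out Hout]]]] := Inv_lex Hk d.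
exists P, p0, dP, (fun p => if out p is Some m then F (m q0) else false).
move=> u; rewrite Hout /preimage; case: (f u) => [w|] /=.
  rewrite ffunE; split => [H | [w' [[<-] H]]]; last exact/HF.
  by exists w; split => //; apply/HF.
by split => // -[w' []].
Qed.
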